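(* Let $n\ge3$ and let $x$ be a vertex of the Mobius ladder $M_{2n}$. Assign to $x$ a label $\ell\in\{1,2,\dots,\lceil n/2\rceil\}$. Then for every vertex $v$ covered by $x$ there exists a vertex $u$, also covered by $x$, such that $d(u,v)=2$.
   Context: For $n\ge2$, the Mobius ladder $M_{2n}$ has vertex set $\{x_1,\dots,x_{2n}\}$ and edge set $\{\{x_i,x_{i+1}\}:1\le i\le 2n\}\cup\{\{x_i,x_{i+n}\}:1\le i\le n\}$, subscripts modulo $2n$. $d$ denotes graph distance. A vertex $x$ carrying label $\ell$ covers exactly the vertices at distance $\ell$ from $x$. *)

(* Defs.v *)
From mathcomp Require Import all_boot.
Unset Printing Implicit Defensive.

(* Mobius ladder M_{2n}: vertex x_{i+1} is encoded by i : 'I_(2n) (0-indexed).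
   Edges: {x_i, x_{i+1}} (indices mod 2n) and {x_i, x_{i+n}}. *)
Definition mobius_adj (n : nat) (u v : 'I_(2 * n)) : bool :=
  [|| (v == (u + 1) %% (2 * n) :> nat),
      (u == (v + 1) %% (2 * n) :> nat) |
      (v == (u + n) %% (2 * n) :> nat)].

Fixpoint walkb (n : nat) (k : nat) (u v : 'I_(2 * n)) : bool :=
  match k with
  | 0 => u == v
  | k'.+1 => [exists w, @mobius_adj n u w && @walkb n k' w v]
  end.

Definition mobius_dist_is (n : nat) (u v : 'I_(2 * n)) (k : nat) : Prop :=
  @walkb n k u v /\ forall k', k' < k -> ~~ @walkb n k' u v.

Definition covers (n : nat) (x : 'I_(2 * n)) (l : nat) (v : 'I_(2 * n)) : Prop :=
  @mobius_dist_is n x v l.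

(* Main.v *)
Require Import Defs.
From mathcomp Require Import all_boot.
From mathcomp Require Import zify.

Section M.
Variable n : nat.
Hypothesis hn : 1 <= n.

Definition Sx (i : nat) := if i.+1 < 2 * n then i.+1 else 0.
Definition Jx (i : nat) := if i < n then i + n else i - n.
Definition Px (i : nat) := if i == 0 then (2 * n).-1 else i.-1.
Definition amod (i j : nat) := if j <= i then i - j else i + 2 * n - j.
Definition cd (i j : nat) := minn (amod i j) (2 * n - amod i j).
Definition D (i j : nat) := minn (cd i j) (n.+1 - cd i j).

Ltac split_ifs := repeat match goal with
 | |- context [if ?c then _ else _] => let E := fresh "E" in destruct c eqn:E
 | H : context [if ?c then _ else _] |- _ => let E := fresh "E" in destruct c eqn:E
 end.
Ltac crunch := unfold D, cd, amod, Sx, Jx, Px in *; split_ifs; lia.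

Lemma modS i : i < 2 * n -> (i + 1) %% (2 * n) = Sx i.
Proof.
move=> hi; rewrite /Sx addn1; case: ifP => h; first by rewrite modn_small.
have -> : i.+1 = 2 * n by lia.
by rewrite modnn.
Qed.

Lemma modJ i : i < 2 * n -> (i + n) %% (2 * n) = Jx i.
Proof.
move=> hi; rewrite /Jx; case: ifP => h; first by rewrite modn_small; lia.
have -> : i + n = (i - n) + 2 * n by lia.
by rewrite modnDr modn_small; lia.
Qed.

Lemma adjE (u v : 'I_(2 * n)) :
  mobius_adj n u v = [|| val v == Sx u, val u == Sx v | val v == Jx u].
Proof. by rewrite /mobius_adj !modS ?modJ. Qed.

Lemma Sx_lt i : Sx i < 2 * n.
Proof. unfold Sx; case: ifP; lia. Qed.
Lemma Px_lt i : i < 2 * n -> Px i < 2 * n.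
Proof. unfold Px; case: ifP; lia. Qed.
Lemma Jx_lt i : i < 2 * n -> Jx i < 2 * n.
Proof. unfold Jx; case: ifP; lia. Qed.
Lemma PxS i : i < 2 * n -> Sx (Px i) = i.
Proof. unfold Px, Sx; case: ifP; case: ifP; lia. Qed.

Definition Df (a : nat) := minn (minn a (2 * n - a)) (n.+1 - minn a (2 * n - a)).

Lemma DE i k : D i k = Df (amod i k).
Proof. by []. Qed.

Lemma amodS i k : i < 2 * n -> k < 2 * n -> amod (Sx i) k = Sx (amod i k).
Proof. move=> *; crunch. Qed.
Lemma amodP i k : i < 2 * n -> k < 2 * n -> amod (Px i) k = Px (amod i k).
Proof. move=> *; crunch. Qed.
Lemma amodJ i k : i < 2 * n -> k < 2 * n -> amod (Jx i) k = Jx (amod i k).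
Proof. move=> *; crunch. Qed.
Lemma amod_lt i k : i < 2 * n -> k < 2 * n -> amod i k < 2 * n.
Proof. move=> *; crunch. Qed.
Lemma SxP i : i < 2 * n -> Px (Sx i) = i.
Proof. move=> *; crunch. Qed.

Lemma DfS a : a < 2 * n -> Df a <= Df (Sx a) + 1.
Proof. move=> *; unfold Df, Sx; split_ifs; lia. Qed.
Lemma DfP a : a < 2 * n -> Df a <= Df (Px a) + 1.
Proof. move=> *; unfold Df, Px; split_ifs; lia. Qed.
Lemma DfJ a : a < 2 * n -> Df a <= Df (Jx a) + 1.
Proof. move=> *; unfold Df, Jx; split_ifs; lia. Qed.

Lemma adj_D i w k : i < 2 * n -> w < 2 * n -> k < 2 * n ->
  [|| w == Sx i, i == Sx w | w == Jx i] -> D i k <= D w k + 1.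
Proof.
move=> hi hw hk /orP [/eqP e|/orP [/eqP e|/eqP e]]; subst; rewrite !DE.
- by rewrite amodS //; apply: DfS; apply: amod_lt.
- have hs : Sx w < 2 * n by unfold Sx; split_ifs; lia.
  have e : amod w k = Px (amod (Sx w) k) by rewrite -amodP ?SxP.
  by rewrite e; apply: DfP; apply: amod_lt.
- by rewrite amodJ //; apply: DfJ; apply: amod_lt.
Qed.

Lemma walk_le k (u v : 'I_(2 * n)) : walkb n k u v -> D u v <= k.
Proof.
elim: k u => [|k IH] u /=.
  move/eqP => ->; have := ltn_ord v; crunch.
case/existsP => w /andP [a /IH h].
rewrite adjE in a.
have := @adj_D u w v (ltn_ord u) (ltn_ord w) (ltn_ord v) a; lia.
Qed.

Lemma Dfstep a m : a < 2 * n -> Df a = m.+1 ->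
  Df (Sx a) = m \/ Df (Px a) = m \/ Df (Jx a) = m.
Proof.
move=> ha hD; unfold Df in hD.
case: (leqP a n) => h1.
- case: (leqP (a + a) n.+1) => h2.
  + right; left; rewrite /Px; case: eqP => e; first lia.
    unfold Df; lia.
  + right; right; rewrite /Jx; case: ifP => e; unfold Df; lia.
- case: (leqP ((2 * n - a) + (2 * n - a)) n.+1) => h2.
  + left; rewrite /Sx; case: ifP => e; unfold Df; lia.
  + right; right; rewrite /Jx; case: ifP => e; unfold Df; lia.
Qed.

Lemma step i k m : i < 2 * n -> k < 2 * n -> D i k = m.+1 ->
  [\/ D (Sx i) k = m, D (Px i) k = m | D (Jx i) k = m].
Proof.
move=> hi hk hD.
have : D (Sx i) k = m \/ D (Px i) k = m \/ D (Jx i) k = m.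
  rewrite !DE amodS // amodP // amodJ //.
  move: hD; rewrite DE; have := @amod_lt i k hi hk.
  move=> ha; exact: Dfstep.
by case=> [h|[h|h]]; [apply: Or31|apply: Or32|apply: Or33].
Qed.

Lemma walk_D k (u v : 'I_(2 * n)) : D u v = k -> walkb n k u v.
Proof.
elim: k u => [|k IH] u /=.
  move=> h; apply/eqP/val_inj => /=.
  have := ltn_ord u; have := ltn_ord v; crunch.
move=> h; apply/existsP.
have hu := ltn_ord u; have hv := ltn_ord v.
case: (@step u v k hu hv h) => hw.
- have hlt := Sx_lt u.
  exists (Ordinal hlt); rewrite adjE /= IH // eqxx //.
- have hlt := @Px_lt u hu.
  exists (Ordinal hlt); rewrite adjE /= IH // andbT.
  apply/orP; right; apply/orP; left; apply/eqP; by rewrite PxS.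
- have hlt := @Jx_lt u hu.
  exists (Ordinal hlt); rewrite adjE /= IH // eqxx !orbT //.
Qed.

Lemma distE (u v : 'I_(2 * n)) k : mobius_dist_is n u v k <-> D u v = k.
Proof.
split.
- case=> h1 h2; have := @walk_le k u v h1 => hle.
  apply/eqP; rewrite eqn_leq hle /=; rewrite leqNgt; apply/negP => hlt.
  by have := h2 _ hlt; rewrite walk_D.
- move=> h; split; first exact: walk_D.
  move=> k' hk'; apply/negP => /walk_le; lia.
Qed.

End M.

Ltac split_ifs := repeat match goal with
 | |- context [if ?c then _ else _] => let E := fresh "E" in destruct c eqn:E
 | H : context [if ?c then _ else _] |- _ => let E := fresh "E" in destruct c eqn:E
 end.
Ltac crunch := unfold D, cd, amod, Sx, Jx, Px in *; split_ifs; lia.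


Lemma Dfn1 n : 3 <= n -> Df n n.-1 = 2.
Proof. move=> h; unfold Df; lia. Qed.

Lemma Dfn2 n : 3 <= n -> Df n n.+1 = 2.
Proof. move=> h; unfold Df; lia. Qed.

Lemma Dfmain n l a : 3 <= n -> 0 < l -> l + l <= n.+1 -> a < 2 * n -> Df n a = l ->
  Df n (if n.-1 <= a then a - n.-1 else a + n.+1) = l \/
  Df n (if n.+1 <= a then a - n.+1 else a + n.-1) = l.
Proof.
move=> hn hl0 hl ha hD; unfold Df in hD.
case: (leqP a n) => h1.
- case: (leqP (a + a) n.+1) => h2.
  + first [left; case: (leqP n.-1 a) => e; unfold Df; lia | right; case: (leqP n.+1 a) => e; unfold Df; lia].
  + first [left; case: (leqP n.-1 a) => e; unfold Df; lia | right; case: (leqP n.+1 a) => e; unfold Df; lia].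
- case: (leqP ((2 * n - a) + (2 * n - a)) n.+1) => h2.
  + first [left; case: (leqP n.-1 a) => e; unfold Df; lia | right; case: (leqP n.+1 a) => e; unfold Df; lia].
  + first [left; case: (leqP n.-1 a) => e; unfold Df; lia | right; case: (leqP n.+1 a) => e; unfold Df; lia].
Qed.

Theorem lemma3p5 (n : nat) (hn : 3 <= n) (x : 'I_(2 * n)) (l : nat)
  (hl1 : 1 <= l) (hl2 : l <= (n + 1) %/ 2) :
  forall v : 'I_(2 * n), @covers n x l v ->
    exists u : 'I_(2 * n), @covers n x l u /\ @mobius_dist_is n u v 2.
Proof.
have hn1 : 1 <= n by lia.
move=> v; rewrite /covers !distE // DE => hv.
have hx := ltn_ord x; have hvv := ltn_ord v.
pose u1 := if v + n.-1 < 2 * n then v + n.-1 else v + n.-1 - 2 * n.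
pose u2 := if v + n.+1 < 2 * n then v + n.+1 else v + n.+1 - 2 * n.
have h1 : u1 < 2 * n by rewrite /u1; case: ifP; lia.
have h2 : u2 < 2 * n by rewrite /u2; case: ifP; lia.
have e1 : amod n x u1 = if n.-1 <= amod n x v then amod n x v - n.-1
                        else amod n x v + n.+1.
  rewrite /u1 /amod; split_ifs; lia.
have e2 : amod n x u2 = if n.+1 <= amod n x v then amod n x v - n.+1
                        else amod n x v + n.-1.
  rewrite /u2 /amod; split_ifs; lia.
have d1 : amod n u1 v = n.-1 by rewrite /u1 /amod; split_ifs; lia.
have d2 : amod n u2 v = n.+1 by rewrite /u2 /amod; split_ifs; lia.
have ha := @amod_lt n hn1 x v hx hvv.
have hl : l + l <= n.+1.
  have := leq_trunc_div (n + 1) 2; have := leq_trunc_div (n+1) 2.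
  move: hl2; rewrite -(leq_pmul2r (isT : 0 < 2)) => hl2'; lia.
case: (@Dfmain n l (amod n x v) hn hl1 hl ha hv) => h; [rewrite -e1 in h|rewrite -e2 in h].
- exists (Ordinal h1); rewrite !distE //= !DE d1 Dfn1 //.
- exists (Ordinal h2); rewrite !distE //= !DE d2 Dfn2 //.
Qed.
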